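(* Let $\mathbf{X}$ be a Banach space, $\mathcal{S}\subset\mathbf{X}$, let $\mathbb{P}$ be a Borel probability measure on $\mathcal{S}$ that is critical for $\mathcal{S}$ with respect to $\mathbf{X}$, and set $s^\ast := s^\ast_{\mathbf{X}}(\mathcal{S})$. Then: (i) Let $s>s^\ast$ and let $c=c(s)>0$, $\varepsilon_0=\varepsilon_0(s)>0$ be constants with $\mathbb{P}(\mathcal{S}\cap\mathcal{B}(\mathbf{x},\varepsilon;\mathbf{X}))\le 2^{-c\varepsilon^{-1/s}}$ for all $\mathbf{x}\in\mathbf{X}$ and $\varepsilon\in(0,\varepsilon_0)$. Then for any $R\in\mathbb{N}$ and any encoder/decoder pair $(E_R,D_R)$ of code-length $R$, \[\mathbb{P}^\ast(\{\mathbf{x}\in\mathcal{S}:\|\mathbf{x}-D_R(E_R(\mathbf{x}))\|_{\mathbf{X}}\le\varepsilon\})\le 2^{R-c\varepsilon^{-1/s}}\qquad\forall\varepsilon\in(0,\varepsilon_0).\] (ii) For every $s>s^\ast$ and every codec $\mathcal{C}$, $\mathbb{P}^\ast(\mathcal{A}^s_{\mathcal{S},\mathbf{X}}(\mathcal{C}))=0$. (iii) For every $0\le s<s^\ast$ there is a codec $\mathcal{C}=((E_R,D_R))_{R\in\mathbb{N}}$ and a constant $C>0$ with $\delta_{\mathcal{S},\mathbf{X}}(E_R,D_R)\le C\cdot R^{-s}$ for all $R\in\mathbb{N}$; in particular $\mathcal{A}^s_{\mathcal{S},\mathbf{X}}(\mathcal{C})=\mathcal{S}$ and $\mathbb{P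}(\mathcal{A}^s_{\mathcal{S},\mathbf{X}}(\mathcal{C}))=1$.
   Context: Let $(\mathbf{X},\|\cdot\|_{\mathbf{X}})$ be a real Banach space and $\mathcal{S}\subset\mathbf{X}$. An encoder/decoder pair of code-length $R\in\mathbb{N}$ is a pair $(E,D)$ with $E:\mathcal{S}\to\{0,1\}^R$, $D:\{0,1\}^R\to\mathbf{X}$; its distortion is $\delta_{\mathcal{S},\mathbf{X}}(E,D)=\sup_{\mathbf{x}\in\mathcal{S}}\|\mathbf{x}-D(E(\mathbf{x}))\|_{\mathbf{X}}$. A codec is a sequence $\mathcal{C}=((E_R,D_R))_{R\in\mathbb{N}}$ with $(E_R,D_R)$ of code-length $R$. The optimal compression rate is $s^\ast_{\mathbf{X}}(\mathcal{S})=\sup\{s\ge0:\exists\text{ codec with }\sup_R R^s\delta_{\mathcal{S},\mathbf{X}}(E_R,D_R)<\infty\}$. For $s\ge0$, $\mathcal{A}^s_{\mathcal{S},\mathbf{X}}(\mathcal{C})=\{\mathbf{x}\in\mathcal{S}:\sup_R R^s\|\mathbf{x}-D_R(E_R(\mathbf{x}))\|_{\mathbf{X}}<\infty\}$. $\mathcal{S}$ carries the trace $\sigma$-algebra $\{\mathcal{S}\cap B: B\text{ Borel in }\mathbf{X}\}$; Borel probability measures on $\mathcal{S}$ are probability measures on it, and $\mathbb{P}^\ast(M)=\inf\{\sum_n\mathbb{P}(M_n): M_n\text{ measurable}, M\subset\bigcup_nM_n\}$. $\mathcal{B}(\mathbf{x},\varepsilon;\mathbf{X})$ is the closed ball. A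 Borel probability measure $\mathbb{P}$ on $\mathcal{S}$ has (logarithmic) growth order $s_0\in[0,\infty)$ w.r.t. $\mathbf{X}$ if for every $s>s_0$ there exist $\varepsilon_0,c>0$ with $\mathbb{P}(\mathcal{S}\cap\mathcal{B}(\mathbf{x},\varepsilon;\mathbf{X}))\le2^{-c\varepsilon^{-1/s}}$ for all $\mathbf{x}\in\mathbf{X}$, $\varepsilon\in(0,\varepsilon_0)$. $\mathbb{P}$ is critical for $\mathcal{S}$ w.r.t. $\mathbf{X}$ if it has growth order $s^\ast_{\mathbf{X}}(\mathcal{S})$. *)

(* Defs.v *)
From HB Require Import structures.
From mathcomp Require Import all_boot all_order all_algebra.
From mathcomp Require Import all_classical all_reals all_analysis.
Set Implicit Arguments. Unset Strict Implicit. Unset Printing Implicit Defensive.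
Import Order.TTheory GRing.Theory Num.Theory.
Import numFieldNormedType.Exports.
Local Open Scope classical_set_scope.
Local Open Scope ring_scope.

Section Defs.
Context {R : realType} {X : completeNormedModType R}.

Definition borelX : set (set X) := <<s open >>.

Definition trace_sets (S : set X) : set (set X) := [set S `&` B | B in borelX].

(** P is a (Borel) probability measure on S (with its trace sigma-algebra);
    P is only meaningful on the sets of [trace_sets S]. *)
Definition prob_on (S : set X) (P : set X -> \bar R) : Prop :=
  [/\ P S = 1%E, P set0 = 0%E,
      (forall A, trace_sets S A -> (0 <= P A)%E) &
      (forall F : nat -> set X, (forall n, trace_sets S (F n)) ->
         trivIset setT F ->
         P (\bigcup_n F n) = (\sum_(n <oo) P (F n))%E)].

Definition outer (S : set X) (P : set X -> \bar R) (M : set X) : \bar R :=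
  ereal_inf [set (\sum_(n <oo) P (F n))%E | F in
     [set F : nat -> set X | (forall n, trace_sets S (F n)) /\
                             M `<=` \bigcup_n F n]].

Definition cball (x : X) (e : R) : set X := [set y | `|x - y| <= e].

Definition encdec (n : nat) : Type := ((X -> n.-tuple bool) * (n.-tuple bool -> X))%type.

(** codec: one encoder/decoder pair per code-length (index 0 unused: N = {1,2,...}) *)
Definition codec : Type := forall n : nat, encdec n.

Definition distortion (S : set X) (n : nat) (ED : encdec n) : \bar R :=
  ereal_sup [set (`|x - ED.2 (ED.1 x)|)%:E | x in S].

Definition optimal_rate (S : set X) : \bar R :=
  ereal_sup [set s%:E | s in [set s : R | 0 <= s /\
     exists C : codec,
       (ereal_sup [set ((n%:R `^ s)%:E * distortion S (C n))%E
                   | n in [set n : nat | (0 < n)%N]] < +oo)%E]].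

Definition approx_class (S : set X) (s : R) (C : codec) : set X :=
  [set x | S x /\
     (ereal_sup [set ((n%:R `^ s) * `|x - (C n).2 ((C n).1 x)|)%:E
                 | n in [set n : nat | (0 < n)%N]] < +oo)%E].

Definition growth_order (S : set X) (P : set X -> \bar R) (s0 : R) : Prop :=
  0 <= s0 /\
  forall s, s0 < s -> exists eps0 c : R, 0 < eps0 /\ 0 < c /\
    forall (x : X) (eps : R), 0 < eps < eps0 ->
      (P (S `&` cball x eps) <= (2 `^ (- (c * eps `^ (- s^-1))))%:E)%E.

Definition critical (S : set X) (P : set X -> \bar R) : Prop :=
  exists s0 : R, optimal_rate S = s0%:E /\ growth_order S P s0.

End Defs.

(* Main.v *)
Require Import Defs.
From HB Require Import structures.
From mathcomp Require Import all_boot all_order all_algebra.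
From mathcomp Require Import all_classical all_reals all_analysis.
From mathcomp Require Import lra.
Import Order.TTheory GRing.Theory Num.Theory.
Import numFieldNormedType.Exports.
Local Open Scope classical_set_scope.
Local Open Scope ring_scope.

Lemma outer_le (R : realType) (X : completeNormedModType R)
  (S : set X) (P : set X -> \bar R) (A : set X) (F : nat -> set X) (l : \bar R) :
  (forall j, trace_sets S (F j)) -> (forall j, (0 <= P (F j))%E) ->
  A `<=` \bigcup_j F j ->
  (forall m, (\sum_(0 <= j < m) P (F j) <= l)%E) -> (outer S P A <= l)%E.
Proof.
move=> tF P0 AF hm.
apply: le_trans (_ : (\sum_(j <oo) P (F j) <= l)%E).
  by apply: ereal_inf_lbound; exists F.
apply: lime_le; first exact: is_cvg_nneseries.
exact: nearW.
Qed.

Lemma trace_cball (R : realType) (X : completeNormedModType R)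
  (S : set X) (y : X) (r : R) : trace_sets S (S `&` cball y r).
Proof.
exists (cball y r) => //.
rewrite /borelX.
have : closed (cball y r) by exact: closed_closed_ball_.
rewrite -openC => oC.
have := @sigma_algebraC X open (~` cball y r) (sub_gen_smallest oC).
by rewrite setCK.
Qed.

Lemma trace_set0 (R : realType) (X : completeNormedModType R)
  (S : set X) : trace_sets S set0.
Proof. by exists set0; [exact: sigma_algebra0 | rewrite setI0]. Qed.

Definition bcode (n j : nat) : n.-tuple bool :=
  nth (nseq_tuple n false) (enum {: n.-tuple bool}) j.

Lemma bcode_surj n (b : n.-tuple bool) :
  exists2 j, (j < 2 ^ n)%N & bcode n j = b.
Proof.
exists (index b (enum {: n.-tuple bool})).
  have := card_tuple n bool; rewrite card_bool cardE => <-.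
  by rewrite index_mem mem_enum.
by rewrite /bcode nth_index // mem_enum.
Qed.

Lemma part_i (R : realType) (X : completeNormedModType R)
  (S : set X) (P : set X -> \bar R) :
  prob_on S P ->
  (forall s c eps0 : R, 0 < c -> 0 < eps0 ->
     (forall (x : X) (eps : R), 0 < eps < eps0 ->
        (P (S `&` cball x eps) <= (2 `^ (- (c * eps `^ (- s^-1))))%:E)%E) ->
     forall (n : nat) (ED : encdec n),
     forall eps : R, 0 < eps < eps0 ->
       (outer S P [set x | S x /\ (`|x - ED.2 (ED.1 x)| <= eps)%R]
          <= (2 `^ (n%:R - c * eps `^ (- s^-1)))%:E)%E).
Proof.
move=> [PS P0 Pge _] s c eps0 c0 e0 hb n ED eps heps.
set beta := 2 `^ (- (c * eps `^ (- s^-1))).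
pose F j := if (j < 2 ^ n)%N then S `&` cball (ED.2 (bcode n j)) eps else set0.
have tF j : trace_sets S (F j).
  by rewrite /F; case: ifP => _; [exact: trace_cball | exact: trace_set0].
have g0 : 0 <= beta by rewrite /beta powR_ge0.
apply: (@outer_le _ _ _ _ _ F) => //.
- by move=> j; exact: Pge.
- move=> x [Sx hx].
  have [j jn cj] := @bcode_surj n (ED.1 x).
  exists j => //; rewrite /F jn; split => //.
  by rewrite /cball /= cj distrC.
- move=> m.
  apply: (@le_trans _ _ ((minn m (2 ^ n))%:R * beta)%:E).
    elim: m => [|m IH]; first by rewrite big_geq // min0n mul0r.
    rewrite big_nat_recr //=.
    rewrite /F; case: ifP => mn.
      apply: le_trans (leeD IH (hb _ _ heps)) _.
      rewrite -EFinD lee_fin.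
      rewrite (minn_idPl (ltnW mn)) (minn_idPl mn) -[m.+1]addn1 natrD mulrDl mul1r.
      by [].
    rewrite P0 adde0; apply: le_trans IH _.
    rewrite lee_fin ler_wpM2r // ler_nat.
    by rewrite leq_min geq_minr andbT (leq_trans (geq_minl _ _)).
  rewrite lee_fin.
  apply: le_trans (_ : (2 ^ n)%:R * beta <= _).
    by rewrite ler_wpM2r // ler_nat geq_minr.
  rewrite /beta powRD; last by apply/implyP => _; rewrite pnatr_eq0.
  by rewrite powR_mulrn // natrX.
Qed.

Lemma part_iii (R : realType) (X : completeNormedModType R)
  (S : set X) (sst : R) :
  optimal_rate S = sst%:E ->
  (forall s : R, 0 <= s < sst ->
     exists (C : codec) (K : R), 0 < K /\
       (forall n : nat, (0 < n)%N ->
          (distortion S (C n) <= (K * n%:R `^ (- s))%:E)%E) /\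
       approx_class S s C = S).
Proof.
move=> hopt s /andP[s0 ssst].
have : (s%:E < optimal_rate S)%E by rewrite hopt lte_fin.
move=> /ereal_sup_gt [_ [s' [s'0 [C hC]] <-]].
rewrite lte_fin => ss'.
set Sig := ereal_sup _ in hC.
have hub n : (0 < n)%N -> (((n%:R `^ s')%:E * distortion S (C n)) <= Sig)%E.
  by move=> n0; apply: ereal_sup_ubound; exists n.
set M := fine Sig.
set K := Num.max M 1.
have K0 : 0 < K by rewrite lt_max ltr01 orbT.
have hd n : (0 < n)%N -> (distortion S (C n) <= (K * n%:R `^ (- s))%:E)%E.
  move=> n0; have := hub n n0; clear hub.
  have nR : 0 < n%:R :> R by rewrite ltr0n.
  have ps' : 0 < n%:R `^ s' by apply: powR_gt0.
  have ps : 0 < n%:R `^ s by apply: powR_gt0.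
  case: (distortion S (C n)) => [r||] h; last by rewrite leNye.
    have SigE : Sig = M%:E.
      rewrite /M fineK // fin_numE; apply/andP; split.
        by apply/eqP => E; move: h; rewrite E leeNy_eq.
      by rewrite lt_eqF.
    move: h; rewrite SigE -EFinM lee_fin => h; rewrite lee_fin.
    have h1 : r <= M / n%:R `^ s'.
      by rewrite ler_pdivlMr // mulrC.
    apply: le_trans h1 _.
    apply: (@le_trans _ _ (K / n%:R `^ s')).
      by rewrite ler_wpM2r ?invr_ge0 ?(ltW ps') // le_max lexx.
    rewrite powRN ler_wpM2l ?(ltW K0) //.
    rewrite lef_pV2 ?posrE //.
    by apply: ler_powR; [rewrite ler1n | exact: ltW].
  move: hC h; rewrite mulry gtr0_sg // mul1e => /lt_le_trans H /H.
  by rewrite ltxx.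
exists C, K; split => //; split => //.
apply/seteqP; split => x; first by case.
move=> Sx; split => //.
apply: (@le_lt_trans _ _ K%:E); last exact: ltry.
apply: ge_ereal_sup => _ [n n0 <-].
rewrite lee_fin.
have nR : 0 < n%:R :> R by rewrite ltr0n.
have ps : 0 < n%:R `^ s by apply: powR_gt0.
have hx : (`|x - (C n).2 ((C n).1 x)|%:E <= distortion S (C n))%E.
  by apply: ereal_sup_ubound; exists x.
have := le_trans hx (hd n n0); rewrite lee_fin => h.
apply: le_trans (ler_wpM2l (ltW ps) h) _.
by rewrite powRN mulrCA divff ?mulr1 // gt_eqF.
Qed.

Lemma level_sum (R : realType) (u : nat -> \bar R) (beta : nat -> R) (n0 : nat) :
  (0 < n0)%N ->
  (forall j, (0 <= u j)%E) ->
  (forall j, (u j <= (beta (trunc_log 2 j))%:E)%E) ->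
  (forall N, 2 ^+ N * beta N <= if (n0 <= N)%N then (2^-1) ^+ N else 0) ->
  forall m, (\sum_(0 <= j < m) u j <= (2 * (2^-1) ^+ n0)%:E)%E.
Proof.
move=> n00 u0 ub bb.
set q : R := 2^-1.
have hN : forall N, (\sum_(0 <= j < 2 ^ N) u j <=
                     (2 * q ^+ n0 - 2 * q ^+ (maxn N n0))%:E)%E.
  elim=> [|N IH].
    rewrite expn0 big_nat1 (maxn_idPr (ltnW n00)) subrr.
    apply: le_trans (ub 0%N) _; rewrite trunc_log0 lee_fin.
    by have := bb 0%N; rewrite expr0 mul1r leqNgt n00.
  rewrite (@big_cat_nat _ _ _ (2 ^ N)) //=; last by rewrite leq_pexp2l.
  have h2 : (\sum_(2 ^ N <= j < 2 ^ N.+1) u j <= (2 ^+ N * beta N)%:E)%E.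
    apply: le_trans (_ : \sum_(2 ^ N <= j < 2 ^ N.+1) (beta N)%:E <= _)%E.
      rewrite big_nat_cond [X in (_ <= X)%E]big_nat_cond.
      apply: lee_sum => j /andP[/andP[j1 j2] _].
      by rewrite -(@trunc_log_eq 2 N j) // j1 j2.
    rewrite sumEFin lee_fin sumr_const_nat expnS mul2n -addnn addnK.
    by rewrite -[beta N *+ _]mulr_natl natrX.
  apply: le_trans (leeD IH h2) _.
  rewrite -EFinD lee_fin.
  have := bb N.
  have q2 : 2 * q = 1 by rewrite /q mulfV.
  case: (leqP n0 N) => hn b.
    rewrite ?(maxn_idPl (leqW hn)) exprSr; move: b; rewrite -/q => b.
    set y := q ^+ N in b *.
    have : 2 * (y * q) = y by rewrite mulrCA q2 mulr1.
    lra.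
  rewrite ?(maxn_idPr hn).
  lra.
move=> m.
apply: le_trans (_ : \sum_(0 <= j < 2 ^ m) u j <= _)%E.
  apply: lee_sum_nneg_natr => //.
  exact: ltnW (ltn_expl m (ltnSn 1)).
apply: le_trans (hN m) _.
rewrite lee_fin lerBlDr lerDl.
by rewrite mulr_ge0 // exprn_ge0 // /q invr_ge0.
Qed.

Lemma event (R : realType) (a K : R) : 0 < a ->
  exists N0 : nat, forall N : nat, (N0 <= N)%N -> K <= N%:R `^ a.
Proof.
move=> a0.
have [K0|K0] := leP K 0.
  by exists 0%N => N _; apply: le_trans K0 (powR_ge0 _ _).
exists (Num.truncn (K `^ a^-1)).+1 => N hN.
have h1 : K `^ a^-1 <= N%:R.
  apply: ltW; apply: lt_le_trans (truncnS_gt _) _.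
  by rewrite ler_nat.
have := @ge0_ler_powR R a (ltW a0) (K `^ a^-1) N%:R.
rewrite !nnegrE powR_ge0 ler0n => /(_ isT isT h1).
by rewrite -powRrM mulVf ?gt_eqF // powRr1 // ltW.
Qed.
Lemma part_ii (R : realType) (X : completeNormedModType R)
  (S : set X) (P : set X -> \bar R) (sst : R) :
  prob_on S P -> critical S P -> optimal_rate S = sst%:E ->
  (forall (s : R) (C : codec), sst < s -> outer S P (approx_class S s C) = 0%E).
Proof.
move=> [PS P0 Pge _] [s0 [hopt0 [s00 grow]]] hopt s C ss.
have s0E : s0 = sst by move: hopt0; rewrite hopt => -[].
subst s0.
set d := (s - sst) / 3.
have d0 : 0 < d by rewrite /d divr_gt0 // subr_gt0.
set s1 := sst + d.
set s2 := sst + d + d.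
have s10 : 0 < s1 by rewrite /s1; lra.
have [eps0 [c [e0 [c0 hb]]]] := grow s1 (ltr_pwDr d0 (lexx _)).
set sig := s2 / s1.
have sig1 : 0 < sig - 1.
  rewrite subr_gt0 /sig ltr_pdivlMr // mul1r /s2 /s1; lra.
have [N1 h1] := event _ (sig - 1) (2 / c) sig1.
have s20 : 0 < s2 by rewrite /s2; lra.
have [N2 h2] := event _ s2 (2 / eps0) s20.
set Nb := maxn 1 (maxn N1 N2).
set r := fun N : nat => N%:R `^ (- s2).
set q : R := 2^-1.
have K1 : forall N, (Nb <= N)%N -> 0 < r N < eps0.
  move=> N hN.
  have N0 : 0 < N%:R :> R by rewrite ltr0n; apply: leq_trans hN; rewrite leq_maxl.
  apply/andP; split; first exact: powR_gt0.
  have := h2 N (leq_trans (leq_trans (leq_maxr _ _) (leq_maxr _ _)) hN) => h.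
  have p0 : 0 < N%:R `^ s2 by exact: powR_gt0.
  rewrite /r powRN.
  have : (N%:R `^ s2)^-1 <= (2 / eps0)^-1.
    by rewrite lef_pV2 ?posrE // divr_gt0.
  rewrite invf_div => h'; apply: le_lt_trans h' _.
  rewrite ltr_pdivrMr //; lra.
have K2 : forall N, (Nb <= N)%N ->
    2 ^+ N * 2 `^ (- (c * r N `^ (- s1^-1))) <= q ^+ N.
  move=> N hN.
  have N0 : 0 < N%:R :> R by rewrite ltr0n; apply: leq_trans hN; rewrite leq_maxl.
  have h := h1 N (leq_trans (leq_trans (leq_maxl _ _) (leq_maxr _ _)) hN).
  have E1 : r N `^ (- s1^-1) = N%:R * N%:R `^ (sig - 1).
    rewrite /r -powRrM mulrNN -/sig.
    rewrite -{1}(subrK 1 sig) addrC powRD; last by rewrite implybE pnatr_eq0 -lt0n -(ltr0n R) N0 orbT.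
    by rewrite powRr1 // ltW.
  have E2 : (N + N)%:R <= c * r N `^ (- s1^-1).
    rewrite E1 natrD.
    have e2 : c * (2 / c) = 2 by rewrite mulrCA divff ?gt_eqF // mulr1.
    have cN : 0 <= c * N%:R by rewrite mulr_ge0 // ltW.
    have := ler_wpM2l cN h.
    rewrite mulrA.
    have -> : c * N%:R * (2 / c) = N%:R * 2 by rewrite mulrAC e2 mulrC.
    lra.
  apply: (@le_trans _ _ (2 ^+ N * 2 `^ (- (N + N)%:R))).
    rewrite ler_wpM2l ?exprn_ge0 //.
    by apply: ler_powR; [lra | rewrite lerN2].
  rewrite powRN powR_mulrn // exprD invfM mulrA divff ?mulr1 ?expf_neq0 //.
  by rewrite /q exprVn mul1r.
set A := approx_class S s C.
have key : forall n0, (Nb <= n0)%N -> (outer S P A <= (2 * q ^+ n0)%:E)%E.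
  move=> n0 hn0.
  have n01 : (0 < n0)%N by apply: leq_trans hn0; rewrite leq_maxl.
  pose F := fun j : nat =>
    if (n0 <= trunc_log 2 j)%N then S `&` cball ((C (trunc_log 2 j)).2
      (bcode (trunc_log 2 j) (j - 2 ^ trunc_log 2 j)%N)) (r (trunc_log 2 j)) else set0.
  have tF j : trace_sets S (F j).
    by rewrite /F; case: ifP => _; [exact: trace_cball | exact: trace_set0].
  apply: (@outer_le _ _ _ _ _ F) => //.
  - by move=> j; exact: Pge.
  - move=> x [Sx hx].
    set Sig := ereal_sup _ in hx.
    have hub n : (0 < n)%N ->
        ((n%:R `^ s * `|x - (C n).2 ((C n).1 x)|)%:E <= Sig)%E.
      by move=> n0'; apply: ereal_sup_ubound; exists n.
    have SigE : Sig = (fine Sig)%:E.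
      rewrite fineK // fin_numE; apply/andP; split; last by rewrite lt_eqF.
      by apply/eqP => E; have := hub 1%N isT; rewrite E leeNy_eq.
    set M := fine Sig in SigE.
    have ss2 : 0 < s - s2 by rewrite /s2 /d; lra.
    have [N3 h3] := event _ (s - s2) M ss2.
    set n := maxn n0 N3.
    have nn0 : (n0 <= n)%N by rewrite leq_maxl.
    have n0' : (0 < n)%N by apply: leq_trans nn0.
    have nR : 0 < n%:R :> R by rewrite ltr0n.
    have dn : `|x - (C n).2 ((C n).1 x)| <= r n.
      have := hub n n0'; rewrite SigE lee_fin => h.
      have ps : 0 < n%:R `^ s by exact: powR_gt0.
      have h' : `|x - (C n).2 ((C n).1 x)| <= M / n%:R `^ s.
        by rewrite ler_pdivlMr // mulrC.
      apply: le_trans h' _.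
      have -> : r n = n%:R `^ (s - s2) / n%:R `^ s.
        rewrite -powRB; last by apply/implyP => _; rewrite gt_eqF.
        by rewrite /r; congr (_ `^ _); lra.
      rewrite ler_wpM2r ?invr_ge0 ?(ltW ps) //.
      exact: h3 (leq_maxr _ _).
    have [k kn ck] := @bcode_surj n ((C n).1 x).
    exists (2 ^ n + k)%N => //.
    have tl : trunc_log 2 (2 ^ n + k) = n.
      apply: trunc_log_eq => //.
      by rewrite leq_addr /= expnS mul2n -addnn ltn_add2l.
    rewrite /F /= tl nn0 addKn ck; split => //.
    by rewrite /cball /= distrC.
  - move=> m.
    apply: (@level_sum _ (fun j => P (F j))
              (fun N => if (n0 <= N)%N then 2 `^ (- (c * r N `^ (- s1^-1))) else 0) n0) => //.
    + by move=> j; exact: Pge.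
    + move=> j; rewrite /F /=.
      case: ifP => h; last by rewrite P0.
      exact/hb/K1/(leq_trans hn0).
    + move=> N; case: ifP => h; last by rewrite mulr0.
      exact/K2/(leq_trans hn0).
have o0 : (0 <= outer S P A)%E.
  apply: le_ereal_inf_tmp => _ [F [tF _] <-].
  by apply: nneseries_ge0 => n _ _; exact: Pge.
move: o0 key; case: (outer S P A) => [y| |] o0 key; last 2 first.
- by have := key Nb (leqnn _).
- by [].
have o0r : 0 <= y by rewrite -lee_fin.
apply/eqP; rewrite eqe eq_le o0r andbT.
rewrite leNgt; apply/negP => opos.
set n0 := maxn Nb (Num.truncn (2 / y)).+1.
have := key n0 (leq_maxl _ _); rewrite lee_fin.
apply/negP; rewrite -ltNge.
have t1 : 2 / y < n0%:R.
  apply: lt_le_trans (truncnS_gt _) _; rewrite ler_nat; exact: leq_maxr.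
have t2 : n0%:R <= 2 ^+ n0 :> R.
  by rewrite -natrX ler_nat ltnW // ltn_expl.
have p2 : 0 < 2 ^+ n0 :> R by rewrite exprn_gt0.
rewrite /q exprVn -/(2 / 2 ^+ n0) ltr_pdivrMr //.
have : 2 / y < 2 ^+ n0 by lra.
by rewrite ltr_pdivrMr // mulrC.
Qed.

Theorem theorem2p2 (R : realType) (X : completeNormedModType R)
  (S : set X) (P : set X -> \bar R) (sst : R) :
  prob_on S P -> critical S P -> optimal_rate S = sst%:E ->
  (* (i) *)
  (forall s c eps0 : R, sst < s -> 0 < c -> 0 < eps0 ->
     (forall (x : X) (eps : R), 0 < eps < eps0 ->
        (P (S `&` cball x eps) <= (2 `^ (- (c * eps `^ (- s^-1))))%:E)%E) ->
     forall (n : nat) (ED : encdec n), (0 < n)%N ->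
     forall eps : R, 0 < eps < eps0 ->
       (outer S P [set x | S x /\ (`|x - ED.2 (ED.1 x)| <= eps)%R]
          <= (2 `^ (n%:R - c * eps `^ (- s^-1)))%:E)%E) /\
  (* (ii) *)
  (forall (s : R) (C : codec), sst < s -> outer S P (approx_class S s C) = 0%E) /\
  (* (iii) *)
  (forall s : R, 0 <= s < sst ->
     exists (C : codec) (K : R), 0 < K /\
       (forall n : nat, (0 < n)%N ->
          (distortion S (C n) <= (K * n%:R `^ (- s))%:E)%E) /\
       approx_class S s C = S /\ P (approx_class S s C) = 1%E).
Proof.
move=> hP hcrit hopt; split; [|split].
- move=> s c eps0 ss c0 e0 hb n ED _ eps heps.
  exact: (part_i _ _ S P hP s c eps0 c0 e0 hb n ED eps heps).
- by move=> s C ss; apply: (part_ii _ _ S P sst hP hcrit hopt).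
- move=> s hs.
  have [C [K [K0 [hd hA]]]] := part_iii _ _ S sst hopt s hs.
  exists C, K; split => //; split => //; split => //.
  by rewrite hA; case: hP.
Qed.
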